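(* Let $B\in\mathbb{R}^{n\times n}$ be strictly diagonally row-dominant with positive diagonal entries and negative off-diagonal entries, $M=B^{-1}$, $P,R$ diagonal with strictly positive diagonal entries, $\beta>0$, and $w\in\mathbb{R}^n$. Assume (A1) $\displaystyle\max_i \frac{M_i w-1}{M_i\mathbf{1}} < \min_j \frac{M_j w+1}{M_j\mathbf{1}}$, and (A2) either $\mathrm{dz}(Mw)=0$, or the set $\mathcal{K}=\arg\max_i \left|\frac{\mathrm{dz}(M_i w)}{M_i\mathbf{1}}\right|$ is a singleton $\{k\}$. Then the closed-loop system $$\dot x=-x+B\,\mathrm{sat}(u)+w,\qquad \dot z=x+\beta\mathbf{1}\mathbf{1}^T\mathrm{dz}(u),\qquad u=-Px-Rz$$ has a unique equilibrium $(x^0,z^0)$, namely the one with $z^0=-R^{-1}(u^0+Px^0)$ and $$x^0=\mathbf{1}\,\frac{\mathrm{dz}(M_k w)}{M_k\mathbf{1}},\qquad u^0_k=-\mathrm{sat}(M_k w)-\frac{\mathrm{dz}(M_k w)}{\beta M_k\mathbf{1}},\qquad u^0_i=-M_i w+\frac{M_i\mathbf{1}}{M_k\mathbf{1}}\mathrm{dz}(M_k w)\ \ (i\neq k),$$ where $k\in\mathcal{K}$ (in the case $\mathrm{dz}(Mw)=0$ this gives $x^0=0$, $u^0=-Mw$ for any choice of $k$).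
   Context: $\mathbf{1}$ denotes the all-ones column vector in $\mathbb{R}^n$; $A_i$ denotes the $i$-th row of a matrix $A$. $\mathrm{sat}(v)=\max(\min(v,1),-1)$ and $\mathrm{dz}(v)=v-\mathrm{sat}(v)$, applied componentwise. An equilibrium is a pair $(x^0,z^0)$ with $u^0=-Px^0-Rz^0$ satisfying $0=-x^0+B\,\mathrm{sat}(u^0)+w$ and $0=x^0+\beta\mathbf{1}\mathbf{1}^T\mathrm{dz}(u^0)$. Under the hypotheses on $B$, $M=B^{-1}$ is entrywise nonnegative and $M_i\mathbf{1}>0$ for all $i$. *)

(* Defs.v *)
From HB Require Import structures.
From mathcomp Require Import all_boot all_order all_algebra.
Set Implicit Arguments. Unset Strict Implicit. Unset Printing Implicit Defensive.
Import Order.TTheory GRing.Theory Num.Theory.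
Local Open Scope ring_scope.

Definition satr {F : realFieldType} (v : F) : F := Num.max (Num.min v 1) (-1).
Definition dzr {F : realFieldType} (v : F) : F := v - satr v.

Definition sat {F : realFieldType} {n : nat} (v : 'cV[F]_n) : 'cV[F]_n := map_mx satr v.
Definition dz {F : realFieldType} {n : nat} (v : 'cV[F]_n) : 'cV[F]_n := map_mx dzr v.

Definition ones {F : realFieldType} (n : nat) : 'cV[F]_n := const_mx 1.

Definition rowdot {F : realFieldType} {n : nat} (M : 'M[F]_n) (v : 'cV[F]_n) (i : 'I_n) : F :=
  (M *m v) i 0.

Definition strictly_row_dominant {F : realFieldType} {n : nat} (B : 'M[F]_n) : Prop :=
  forall i : 'I_n, \sum_(j < n | j != i) `|B i j| < `|B i i|.

Definition is_equilibrium {F : realFieldType} {n : nat}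
  (B P R : 'M[F]_n) (beta : F) (w x z : 'cV[F]_n) : Prop :=
  let u := - (P *m x) - (R *m z) in
  0 = - x + B *m sat u + w /\
  0 = x + beta *: (ones n *m (ones n)^T *m dz u).

Definition argmaxK {F : realFieldType} {n : nat} (M : 'M[F]_n) (w : 'cV[F]_n) : {set 'I_n} :=
  [set i | [forall j, `|dzr (rowdot M w j) / rowdot M (ones n) j|
                        <= `|dzr (rowdot M w i) / rowdot M (ones n) i| ]].

Definition x0_of {F : realFieldType} {n : nat} (M : 'M[F]_n) (w : 'cV[F]_n) (k : 'I_n)
  : 'cV[F]_n :=
  dzr (rowdot M w k) / rowdot M (ones n) k *: ones n.

Definition u0_of {F : realFieldType} {n : nat} (M : 'M[F]_n) (beta : F) (w : 'cV[F]_n)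
  (k : 'I_n) : 'cV[F]_n :=
  \col_i (if i == k then
            - satr (rowdot M w k) - dzr (rowdot M w k) / (beta * rowdot M (ones n) k)
          else
            - rowdot M w i + rowdot M (ones n) i / rowdot M (ones n) k * dzr (rowdot M w k)).

Definition z0_of {F : realFieldType} {n : nat} (M P R : 'M[F]_n) (beta : F) (w : 'cV[F]_n)
  (k : 'I_n) : 'cV[F]_n :=
  - (invmx R *m (u0_of M beta w k + P *m x0_of M w k)).

(* Main.v *)
Require Import Defs.
From HB Require Import structures.
From mathcomp Require Import all_boot all_order all_algebra.
From mathcomp Require Import lra ring.
Import Order.TTheory GRing.Theory Num.Theory.
Local Open Scope ring_scope.

Lemma exists_max {T : finType} {F : realFieldType} (f : T -> F) (t0 : T) :
  exists i, forall j, f j <= f i.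
Proof.
have [i _ H] := @arg_maxP _ F T t0 predT f isT.
by exists i => j; apply: H.
Qed.

Lemma dom_kernel (F : realFieldType) n (A : 'M[F]_n) (v : 'rV[F]_n) :
  strictly_row_dominant A -> v *m A^T = 0 -> v = 0.
Proof.
move=> hd hv; apply/matrixP => a j; rewrite ord1 !mxE.
have [i hi] := exists_max (fun l => `|v 0 l|) j.
suff : `|v 0 i| <= 0.
  by move=> h; apply/normr0_eq0/le_anti; rewrite normr_ge0 andbT (le_trans (hi j)).
rewrite leNgt; apply/negP => hpos.
have he : \sum_l v 0 l * A i l = 0.
  transitivity ((v *m A^T) 0 i); first by rewrite mxE; apply: eq_bigr => l _; rewrite mxE.
  by rewrite hv mxE.
rewrite (bigD1 i) //= in he.
have h1 : `|A i i| * `|v 0 i| <= `|v 0 i| * \sum_(l < n | l != i) `|A i l|.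
  have -> : `|A i i| * `|v 0 i| = `|\sum_(l < n | l != i) v 0 l * A i l|.
    by rewrite -normrM mulrC; move/eqP: he; rewrite addr_eq0 => /eqP ->; rewrite normrN.
  apply: (le_trans (ler_norm_sum _ _ _)); rewrite mulr_sumr; apply: ler_sum => l _.
  by rewrite normrM ler_wpM2r.
have := hd i; rewrite -(ltr_pM2l hpos) => h2.
by rewrite mulrC in h1; have := lt_le_trans h2 h1; rewrite ltxx.
Qed.

Lemma dom_unit (F : realFieldType) n (A : 'M[F]_n) :
  strictly_row_dominant A -> A \in unitmx.
Proof.
move=> hd; rewrite -unitmx_tr -row_free_unit -kermx_eq0 -submx0.
apply/row_subP => i.
have -> : row i (kermx A^T) = 0.
  apply: (@dom_kernel _ _ A _ hd); apply/sub_kermxP; exact: row_sub.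
by rewrite sub0mx.
Qed.

Lemma m_pos (F : realFieldType) n (B : 'M[F]_n) :
  strictly_row_dominant B -> (forall i, 0 < B i i) ->
  (forall i j, i != j -> B i j < 0) ->
  forall i, 0 < rowdot (invmx B) (ones n) i.
Proof.
move=> hd hpos hneg i.
have hu := @dom_unit _ _ B hd.
set m := invmx B *m ones n.
have hBm : B *m m = ones n by rewrite /m mulKVmx.
have [i0 hi0] := exists_max (fun l => - m l 0) i.
suff h0 : 0 < m i0 0.
  by rewrite /rowdot -/m (lt_le_trans h0) // -lerN2 hi0.
rewrite ltNge; apply/negP => hle.
have he : \sum_l B i0 l * m l 0 = 1.
  by have := congr1 (fun M : 'cV[F]_n => M i0 0) hBm; rewrite !mxE.
rewrite (bigD1 i0) //= in he.
have h1 : \sum_(l < n | l != i0) B i0 l * m l 0 <= m i0 0 * \sum_(l < n | l != i0) B i0 l.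
  rewrite mulr_sumr; apply: ler_sum => l hl.
  rewrite [X in _ <= X]mulrC; apply: ler_wnM2l; first by apply/ltW/hneg; rewrite eq_sym.
  by rewrite -lerN2 hi0.
have h2 : 0 < B i0 i0 + \sum_(l < n | l != i0) B i0 l.
  have := hd i0; rewrite gtr0_norm // => h.
  rewrite -subr_gt0 in h; apply: (lt_le_trans h); rewrite lerD2l.
  have -> : \sum_(l < n | l != i0) B i0 l = - \sum_(l < n | l != i0) `|B i0 l|.
    rewrite -sumrN; apply: eq_bigr => l hl; rewrite ltr0_norm ?opprK //.
    by apply: hneg; rewrite eq_sym.
  by rewrite lexx.
have : B i0 i0 * m i0 0 + \sum_(l < n | l != i0) B i0 l * m l 0 <= 0.
  apply: (le_trans (_ : _ <= B i0 i0 * m i0 0 + m i0 0 * \sum_(l < n | l != i0) B i0 l)); first by rewrite lerD2l.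
  rewrite [X in X + _]mulrC -mulrDr; apply: mulr_le0_ge0 => //; exact: ltW.
by rewrite he ler10.
Qed.


Section S.
Variable F : realFieldType.
Implicit Types v : F.

Lemma satr_id v : -1 <= v -> v <= 1 -> satr v = v.
Proof. by move=> h1 h2; rewrite /satr min_l // max_l. Qed.
Lemma satr_hi v : 1 <= v -> satr v = 1.
Proof. by move=> h; rewrite /satr min_r // max_l //; lra. Qed.
Lemma satr_lo v : v <= -1 -> satr v = -1.
Proof.
move=> h; rewrite /satr min_l ?max_r //; lra.
Qed.
Lemma dzr_id v : -1 <= v -> v <= 1 -> dzr v = 0.
Proof. by move=> h1 h2; rewrite /dzr satr_id // subrr. Qed.
Lemma dzr_hi v : 1 <= v -> dzr v = v - 1.
Proof. by move=> h; rewrite /dzr satr_hi. Qed.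
Lemma dzr_lo v : v <= -1 -> dzr v = v + 1.
Proof. by move=> h; rewrite /dzr satr_lo // opprK. Qed.

Variant sat_spec v : F -> F -> bool -> bool -> bool -> Prop :=
| SatLo of v < -1 : sat_spec v (-1) (v + 1) true false false
| SatMid of -1 <= v & v <= 1 : sat_spec v v 0 false true false
| SatHi of 1 < v : sat_spec v 1 (v - 1) false false true.

Lemma satP v : sat_spec v (satr v) (dzr v) (v < -1) ((-1 <= v) && (v <= 1)) (1 < v).
Proof.
case: (ltrP v (-1)) => h1.
  have h2 : v <= 1 by lra.
  rewrite satr_lo ?dzr_lo ?(ltW h1) // ltNge h2 /=.
  by constructor.
case: (ltrP 1 v) => h2.
  by rewrite satr_hi ?dzr_hi ?(ltW h2) //=; constructor.
by rewrite satr_id ?dzr_id //=; constructor.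
Qed.

Lemma satr_bnd v : -1 <= satr v <= 1.
Proof. case: (satP v) => *; apply/andP; split; lra. Qed.
Lemma satr_dzr v : v = satr v + dzr v.
Proof. by rewrite /dzr addrC subrK. Qed.
Lemma sd_cases v : (v < -1 /\ satr v = -1 /\ dzr v = v + 1) \/
  ((-1 <= v /\ v <= 1) /\ satr v = v /\ dzr v = 0) \/ (1 < v /\ satr v = 1 /\ dzr v = v - 1).
Proof. by case: (satP v) => *; [left|right;left|right;right]. Qed.
End S.
Arguments sd_cases {F} v.
Arguments satr_bnd {F} v.
Arguments satr_dzr {F} v.


Section Sc.
Variable F : realFieldType.
Variable n : nat.
Variables (a m : 'I_n -> F) (beta : F).
Hypothesis hm : forall i, 0 < m i.
Hypothesis hA1 : forall i j, (a i - 1) / m i < (a j + 1) / m j.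
Hypothesis hbeta : 0 < beta.
Let d i := dzr (a i) / m i.

Lemma dE i : d i * m i = dzr (a i).
Proof. by rewrite /d divfK // gt_eqF. Qed.
Lemma divE x i : x / m i * m i = x.
Proof. by rewrite divfK // gt_eqF. Qed.

Lemma A1m i j : exists p q, p * m i = a i - 1 /\ q * m j = a j + 1 /\ p < q.
Proof. by exists ((a i - 1) / m i), ((a j + 1) / m j); rewrite !divE. Qed.

Lemma d_sgn i : (0 < dzr (a i) -> 0 < d i) /\ (dzr (a i) < 0 -> d i < 0)
  /\ (dzr (a i) = 0 -> d i = 0).
Proof.
have hmi := hm i; have := dE i; split; [|split] => h; [nra|nra|]. 
by rewrite /d h mul0r.
Qed.

Lemma bnds k (hk : forall j, `|d j| <= `|d k|) i : -1 <= d k * m i - a i <= 1.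
Proof.
have hmi := hm i; have hmk := hm k.
have [p [q [hp [hq hpq]]]] := A1m k i.
have [p' [q' [hp' [hq' hpq']]]] := A1m i k.
have hki := hk i; have eki := dE i; have ekk := dE k.
have [sk1 [sk2 sk3]] := d_sgn k; have [si1 [si2 si3]] := d_sgn i.
have [[hak [_ ek]]|[[hak [_ ek]]|[hak [_ ek]]]] := sd_cases (a k);
have [[hai [_ ei]]|[[hai [_ ei]]|[hai [_ ei]]]] := sd_cases (a i);
  rewrite ?ek ?ei in sk1 sk2 sk3 si1 si2 si3 eki ekk.
all: first [ have e1 : d k = p by apply: (@mulIf _ (m k)); [rewrite gt_eqF | lra]
           | have e1 : d k = q' by apply: (@mulIf _ (m k)); [rewrite gt_eqF | lra]
           | idtac ].
all: first [ have e2 : d i = p' by apply: (@mulIf _ (m i)); [rewrite gt_eqF | lra]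
           | have e2 : d i = q by apply: (@mulIf _ (m i)); [rewrite gt_eqF | lra]
           | idtac ].
all: first [ have hdi : 0 < d i by apply: si1; lra
           | have hdi : d i < 0 by apply: si2; lra
           | have hdi : d i = 0 by apply: si3 ].
all: first [ have hdk : 0 < d k by apply: sk1; lra
           | have hdk : d k < 0 by apply: sk2; lra
           | have hdk : d k = 0 by apply: sk3 ].
all: move: hki; rewrite ?(gtr0_norm hdi) ?(ltr0_norm hdi) ?(gtr0_norm hdk) ?(ltr0_norm hdk) ?hdi ?hdk ?normr0 => hki.
all: apply/andP; split; nra.
Qed.
End Sc.
Arguments bnds {F n a m} hm hA1 {k} hk i.
Arguments dE {F n a m} hm i.
Arguments divE {F n m} hm x i.
Arguments d_sgn {F n a m} hm i.
Arguments A1m {F n a m} hm hA1 i j.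


Section Sc2.
Variable F : realFieldType.
Variable n : nat.
Variables (a m : 'I_n -> F) (beta : F).
Hypothesis hm : forall i, 0 < m i.
Hypothesis hA1 : forall i j, (a i - 1) / m i < (a j + 1) / m j.
Hypothesis hbeta : 0 < beta.
Let d i := dzr (a i) / m i.

Lemma exist_sc k (hk : forall j, `|d j| <= `|d k|) :
  let u := fun i => if i == k then - satr (a k) - dzr (a k) / (beta * m k)
                    else - a i + m i / m k * dzr (a k) in
  (forall i, satr (u i) = d k * m i - a i) /\ d k = - beta * \sum_j dzr (u j).
Proof.
move=> u.
have hb : forall i, -1 <= d k * m i - a i <= 1 := bnds hm hA1 hk.
have huk : u k = - satr (a k) - d k / beta.
  by rewrite /u eqxx /d -mulrA -invfM [m k * beta]mulrC.
have hui : forall i, i != k -> u i = d k * m i - a i.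
  move=> i /negbTE h; rewrite /u h /d; ring.
have ekk : d k * m k = dzr (a k) := dE (a:=a) hm k.
have hhk : forall j, `|d j| <= `|d k| := hk.
have hmk := hm k.
move: (d k) huk hui ekk hb => c huk hui ekk hb {hhk}.
have hdzk : satr (u k) = c * m k - a k /\ dzr (u k) = - (c / beta).
  rewrite huk; set t := c / beta.
  have ht : t * beta = c by rewrite /t divfK // gt_eqF.
  have [[hak [sk ek]]|[[hak [sk ek]]|[hak [sk ek]]]] := sd_cases (a k);
    rewrite sk; rewrite ek in ekk.
  - have hc0 : c < 0 by nra.
    have ht0 : t < 0 by rewrite /t ltr_pdivrMr // mul0r.
    by rewrite satr_hi ?dzr_hi; [split; lra | lra | lra].
  - have hc0 : c = 0 by nra.
    have ht0 : t = 0 by rewrite /t hc0 mul0r.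
    rewrite ht0 subr0 satr_id ?dzr_id; [split; lra|lra|lra|lra|lra].
  - have hc0 : 0 < c by nra.
    have ht0 : 0 < t by rewrite /t divr_gt0.
    by rewrite satr_lo ?dzr_lo; [split; lra | lra | lra].
split.
  move=> i; case: (eqVneq i k) => [->|hik]; first exact: hdzk.1.
  rewrite hui // satr_id //; by case/andP: (hb i).
rewrite (bigD1 k) //= big1 ?addr0 => [|j hj].
  by rewrite hdzk.2 mulNr mulrN opprK mulrC divfK // gt_eqF.
by rewrite hui // dzr_id //; case/andP: (hb j).
Qed.

Lemma uniq_sc (u : 'I_n -> F) c k :
  (forall j, `|d j| <= `|d k|) ->
  ((forall i, dzr (a i) = 0) \/ (forall i, (forall j, `|d j| <= `|d i|) -> i = k)) ->
  c = - beta * \sum_j dzr (u j) ->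
  (forall i, satr (u i) = c * m i - a i) ->
  d k = c /\ (forall i, i != k -> dzr (u i) = 0).
Proof.
move=> hk hA2 hc hs.
have SC : forall i j, 0 < dzr (u i) -> dzr (u j) < 0 -> False.
  move=> i j hi hj.
  have hmi := hm i; have hmj := hm j.
  have [p [q [hp [hq hpq]]]] := A1m hm hA1 j i.
  have hsi := hs i; have hsj := hs j.
  have [[h1 [s1 e1]]|[[h1 [s1 e1]]|[h1 [s1 e1]]]] := sd_cases (u i); rewrite e1 in hi; try lra.
  have [[h2 [s2 e2]]|[[h2 [s2 e2]]|[h2 [s2 e2]]]] := sd_cases (u j); rewrite e2 in hj; try lra.
  rewrite s1 in hsi; rewrite s2 in hsj.
  have epc : p = c by apply: (@mulIf _ (m j)); [rewrite gt_eqF | lra].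
  have eqc : q = c by apply: (@mulIf _ (m i)); [rewrite gt_eqF | lra].
  lra.
have CLp : forall i, 0 < dzr (u i) -> c < 0.
  move=> i hi.
  have hge : forall j, 0 <= dzr (u j).
    by move=> j; rewrite leNgt; apply/negP => /(SC i j hi).
  have : 0 < \sum_j dzr (u j).
    rewrite (bigD1 i) //=; apply: (lt_le_trans hi); rewrite lerDl.
    by apply: sumr_ge0 => j _; exact: hge.
  by move=> hS; rewrite hc mulNr oppr_lt0; exact: mulr_gt0.
have CLn : forall i, dzr (u i) < 0 -> 0 < c.
  move=> i hi.
  have hge : forall j, dzr (u j) <= 0.
    by move=> j; rewrite leNgt; apply/negP => /(SC j i) /(_ hi).
  have : \sum_j dzr (u j) < 0.
    rewrite (bigD1 i) //=; apply: (le_lt_trans _ hi); rewrite gerDl.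
    by apply: sumr_le0 => j _; exact: hge.
  by move=> hS; rewrite hc mulNr oppr_gt0 pmulr_rlt0.
have Y : forall i, dzr (u i) != 0 -> d i = c.
  move=> i hne; have hmi := hm i; have hsi := hs i; have hdi := dE (a:=a) hm i.
  apply: (@mulIf _ (m i)); first by rewrite gt_eqF.
  rewrite hdi.
  have [[h1 [s1 e1]]|[[h1 [s1 e1]]|[h1 [s1 e1]]]] := sd_cases (u i).
  - have hc0 : 0 < c by apply: (CLn i); lra.
    have hcm := mulr_gt0 hc0 hmi.
    rewrite dzr_hi; lra.
  - by move: hne; rewrite e1 eqxx.
  - have hc0 : c < 0 by apply: (CLp i); lra.
    have hcm : c * m i < 0 by rewrite pmulr_llt0.
    rewrite dzr_lo; lra.
have W : c = 0 -> forall i, dzr (u i) = 0.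
  move=> c0 i; case: (ltrgtP (dzr (u i)) 0) => h //;
    [have := CLn i h | have := CLp i h]; lra.
have Z : c != 0 -> exists i, dzr (u i) != 0.
  move=> hc0; case: (pickP (fun i => dzr (u i) != 0)) => [i hi|hnone]; first by exists i.
  exfalso; move/eqP: hc0; apply; rewrite hc big1 ?mulr0 // => i _.
  by move: (hnone i) => /negbFE /eqP.
have G : forall l, (0 < d l -> d l <= c) /\ (d l < 0 -> c <= d l).
  move=> l; have hml := hm l; have hdl0 : d l * m l = dzr (a l) := dE (a:=a) hm l.
  have := satr_bnd (u l); rewrite hs => /andP [b1 b2].
  move: (d l) hdl0 => x hdl.
  have [[h1 [s1 e1]]|[[h1 [s1 e1]]|[h1 [s1 e1]]]] := sd_cases (a l);
    rewrite e1 in hdl; split => h; nra.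
have hdk : d k = c.
  have [hk1 hk2] := G k.
  case: (eqVneq c 0) => [c0|hc0].
    by case: (ltrgtP (d k) 0) => h; [have := hk2 h | have := hk1 h |]; lra.
  have [i hi] := Z hc0; have hdi := Y i hi.
  have := hk i; rewrite hdi => hki.
  case: (ltrgtP c 0) => hcs; last by move/eqP: hc0.
  - rewrite (ltr0_norm hcs) in hki.
    case: (ltrgtP (d k) 0) => h.
    + rewrite (ltr0_norm h) in hki; have := hk2 h; lra.
    + have := hk1 h; lra.
    + rewrite h normr0 in hki; lra.
  - rewrite (gtr0_norm hcs) in hki.
    case: (ltrgtP (d k) 0) => h.
    + have := hk2 h; lra.
    + rewrite (gtr0_norm h) in hki; have := hk1 h; lra.
    + rewrite h normr0 in hki; lra.
split => // i hik.
case: (eqVneq c 0) => [c0|hc0]; first exact: W c0 i.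
case: (eqVneq (dzr (u i)) 0) => // hne; exfalso.
have hdi := Y i hne.
have hmax : forall j, `|d j| <= `|d i| by move=> j; rewrite hdi -hdk; exact: hk j.
case: hA2 => [hz|hu].
  move: hdk; rewrite /d (hz k) mul0r => h.
  by move/eqP: hc0; rewrite -h.
by move/eqP: hik; apply; exact: hu i hmax.
Qed.
End Sc2.


Lemma onesdz (F : realFieldType) n (v : 'cV[F]_n) i :
  (ones n *m (ones n)^T *m dz v) i 0 = \sum_j dzr (v j 0).
Proof.
rewrite mxE; apply: eq_bigr => j _.
by rewrite !mxE big_ord1 !mxE !mul1r.
Qed.

Lemma eq_fwd (F : realFieldType) n (B P R : 'M[F]_n) beta w x z :
  B \in unitmx -> is_equilibrium B P R beta w x z ->
  let u := - (P *m x) - (R *m z) in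
  let c := - beta * \sum_j dzr (u j 0) in
  x = c *: ones n /\
  forall i, satr (u i 0) = c * rowdot (invmx B) (ones n) i - rowdot (invmx B) w i.
Proof.
move=> hB [e1 e2] u c.
have hx : x = c *: ones n.
  have hx' : x = - (beta *: (ones n *m (ones n)^T *m dz u)).
    by apply/eqP; rewrite -addr_eq0 -e2.
  apply/matrixP => i j; rewrite ord1 hx' mxE [(beta *: (_ : 'cV[F]_n)) _ _]mxE onesdz.
  by rewrite [RHS]mxE /ones mxE mulr1 /c mulNr.
split => // i.
have hs : sat u = invmx B *m (x - w).
  rewrite -[sat u](mulKmx hB); congr (_ *m _).
  apply/matrixP => i' j; have := congr1 (fun X : 'cV[F]_n => X i' j) e1.
  rewrite !mxE => h; lra.
have := congr1 (fun X : 'cV[F]_n => X i 0) hs.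
rewrite {1}/sat mxE => ->.
rewrite hx mulmxBr -scalemxAr /rowdot.
by rewrite mxE [(c *: (_ : 'cV[F]_n)) _ _]mxE [(- (_ : 'cV[F]_n)) _ _]mxE.
Qed.

Lemma eq_bwd (F : realFieldType) n (B P R : 'M[F]_n) beta w x z c :
  B \in unitmx ->
  let u := - (P *m x) - (R *m z) in
  x = c *: ones n -> c = - beta * \sum_j dzr (u j 0) ->
  (forall i, satr (u i 0) = c * rowdot (invmx B) (ones n) i - rowdot (invmx B) w i) ->
  is_equilibrium B P R beta w x z.
Proof.
move=> hB u hx hc hs; split.
- have hsat : sat u = invmx B *m (x - w).
    apply/matrixP => i j; rewrite ord1 {1}/sat mxE hs hx mulmxBr -scalemxAr.
    by rewrite mxE [(c *: (_ : 'cV[F]_n)) _ _]mxE [(- (_ : 'cV[F]_n)) _ _]mxE.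
  by rewrite -/u hsat mulKVmx // addKr addNr.
- apply/matrixP => i j; rewrite ord1 [LHS]mxE mxE [(beta *: (_ : 'cV[F]_n)) _ _]mxE onesdz -/u.
  rewrite [in x i 0]hx mxE /ones mxE mulr1.
  rewrite hc; ring.
Qed.

Theorem lemma2 (F : realFieldType) (n : nat) (hn : (0 < n)%N)
  (B P R : 'M[F]_n) (beta : F) (w : 'cV[F]_n) :
  strictly_row_dominant B ->
  (forall i : 'I_n, 0 < B i i) ->
  (forall i j : 'I_n, i != j -> B i j < 0) ->
  is_diag_mx P -> (forall i : 'I_n, 0 < P i i) ->
  is_diag_mx R -> (forall i : 'I_n, 0 < R i i) ->
  0 < beta ->
  let M := invmx B in
  (* (A1): max_i (M_i w - 1)/(M_i 1) < min_j (M_j w + 1)/(M_j 1) *)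
  (forall i j : 'I_n,
     (rowdot M w i - 1) / rowdot M (ones n) i < (rowdot M w j + 1) / rowdot M (ones n) j) ->
  (* (A2) *)
  (dz (M *m w) = 0 \/ exists k : 'I_n, argmaxK M w = [set k]) ->
  (exists! xz : 'cV[F]_n * 'cV[F]_n, is_equilibrium B P R beta w xz.1 xz.2) /\
  (forall k : 'I_n, k \in argmaxK M w ->
     is_equilibrium B P R beta w (x0_of M w k) (z0_of M P R beta w k) /\
     (forall x z : 'cV[F]_n, is_equilibrium B P R beta w x z ->
        x = x0_of M w k /\ z = z0_of M P R beta w k)).
Proof.
move=> hd hpos hneg hPd hPp hRd hRp hb M hA1 hA2.
have hBu : B \in unitmx := @dom_unit _ _ B hd.
have hRdom : strictly_row_dominant R.
  move=> i; rewrite big1 ?gtr0_norm // => j hj.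
  move/is_diag_mxP: hRd => h.
  by rewrite (h i j) ?normr0 // eq_sym.
have hRu := @dom_unit _ _ R hRdom.
have hm : forall i, 0 < rowdot M (ones n) i := @m_pos _ _ B hd hpos hneg.
pose a := rowdot M w; pose m := rowdot M (ones n).
have hA1' : forall i j, (a i - 1) / m i < (a j + 1) / m j := hA1.
have memK : forall k, k \in argmaxK M w ->
    forall j, `|dzr (a j) / m j| <= `|dzr (a k) / m k|.
  by move=> k; rewrite inE => /forallP.
have hB : forall k : 'I_n, k \in argmaxK M w ->
     is_equilibrium B P R beta w (x0_of M w k) (z0_of M P R beta w k) /\
     (forall x z : 'cV[F]_n, is_equilibrium B P R beta w x z ->
        x = x0_of M w k /\ z = z0_of M P R beta w k).
  move=> k hk.
  have hk' := memK k hk.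
  have hA2' : (forall i, dzr (a i) = 0) \/
      (forall i, (forall j, `|dzr (a j) / m j| <= `|dzr (a i) / m i|) -> i = k).
    case: hA2 => [hz|[k' hk1]]; [left => i | right => i hi].
      have := congr1 (fun X : 'cV[F]_n => X i 0) hz.
      by rewrite /dz mxE [RHS]mxE.
    have : i \in argmaxK M w by rewrite inE; apply/forallP.
    rewrite hk1 inE => /eqP ->.
    by move: hk; rewrite hk1 inE => /eqP ->.
  split.
  - set x0 := x0_of M w k; set u0 := u0_of M beta w k.
    have hu : - (P *m x0) - (R *m z0_of M P R beta w k) = u0.
      by rewrite /z0_of mulmxN mulKVmx // -/u0 -/x0 opprK addrC addrK.
    have [hs hc] := @exist_sc _ _ a m beta hm hA1' hb k hk'.
    apply: (@eq_bwd _ _ B P R beta w x0 _ (dzr (a k) / m k) hBu) => //.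
    + rewrite hu {1}hc; congr (_ * _); apply: eq_bigr => j _.
      by rewrite /u0 /u0_of mxE.
    + by move=> i; rewrite hu /u0 /u0_of mxE; exact: hs i.
  - move=> x z heq.
    have [hx hs] := @eq_fwd _ _ B P R beta w x z hBu heq.
    move: hx hs; set u := - (P *m x) - (R *m z).
    move: (erefl (- beta * \sum_j dzr (u j 0))).
    move: {-1}(- beta * \sum_j dzr (u j 0)) => c hc hx hs; symmetry in hc.
    have [hdk hz] := @uniq_sc _ _ a m beta hm hA1' hb (fun i => u i 0) c k hk' hA2' hc hs.
    have hxe : x = x0_of M w k by rewrite hx /x0_of -hdk.
    have hmk := hm k.
    have hu0 : u = u0_of M beta w k.
      apply/matrixP => i j; rewrite ord1 [RHS]mxE.
      rewrite (satr_dzr (u i 0)) hs.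
      case: (eqVneq i k) => [->|hik].
      * have hck : c = - beta * dzr (u k 0).
          by rewrite hc (bigD1 k) //= big1 ?addr0 // => j' hj; exact: hz j' hj.
        have e3 : dzr (a k) / (beta * m k) = c / beta.
          rewrite -hdk; field; apply/andP; split; rewrite gt_eqF //.
        have e4 : dzr (u k 0) = - (c / beta).
          rewrite hck; field; rewrite gt_eqF //.
        have eD : dzr (a k) = c * m k by rewrite -hdk divfK // gt_eqF.
        rewrite ?eqxx e3 e4 -/M -/a -/m; have := satr_dzr (a k); lra.
      * rewrite hz // addr0 -/M -/a -/m -hdk; field; rewrite gt_eqF //.
    split => //.
    rewrite /z0_of -hu0 -hxe -{1}(mulKmx hRu z) -mulmxN; congr (_ *m _).
    by rewrite /u addrAC addNr add0r opprK.
split => //.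
have [k hk] := exists_max (fun i => `|dzr (a i) / m i|) (Ordinal hn).
have hkK : k \in argmaxK M w by rewrite inE; apply/forallP.
have [he hu] := hB k hkK.
exists (x0_of M w k, z0_of M P R beta w k); split => // [[x z]] /= heq.
by have [-> ->] := hu x z heq.
Qed.
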